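(* Let $K$ be a twisted knot diagram with an even number of bars. Then $K$ admits a coloring by the twisted biquandle $(\mathbb{Z},\ a\ast b=a\circ b=a+1,\ f(a)=-a)$ if and only if $S(K)=0$.
   Context: A twisted knot diagram is a virtual knot diagram with finitely many bars on its edges. Segments are the pieces between real crossings and bars. A coloring by $(\mathbb{Z}, a\ast b=a\circ b=a+1, f(a)=-a)$ labels segments by integers so that at each real crossing, with $x$ the label of the under-strand segment to the right of the over-strand and $y$ the label of the over-strand segment to the right of the under-strand (right with respect to strand orientations), the other under-segment is labeled $x+1$ and the other over-segment $y+1$, and labels on the two sides of a bar are negatives of each other. If $K$ has $2n\geq 2$ bars, they cut $K$ into edges $e_1,\dots,e_{2n}$ numbered consecutively along the orientation; for an edge $e$, $o_\pm(e)$ (resp. $u_\pm(e)$) is the number of positive/negative crossings at which $e$ is the over-strand (resp. under-strand), $s(e)=u_+(e)+o_-(e)-u_-(e)-o_+(e)$, and $S(K)=\left|\sum_{i=1}^n s(e_{2i-1})-\sum_{i=1}^n s(e_{2i})\right|$; $S(K)=0$ if there are no bars. A crossing is positive if, with both strands pointing upward, the over-strand runs from bottom-left to top-right. *)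

(* Defs.v *)
From HB Require Import structures.
From mathcomp Require Import all_boot all_order all_algebra.
Set Implicit Arguments. Unset Strict Implicit. Unset Printing Implicit Defensive.
Import Order.TTheory GRing.Theory Num.Theory.

(* A twisted knot diagram is encoded by what one meets when travelling once
   around the (single, oriented) component, starting at some point:
   a bar, or a passage over / under the real crossing labelled c.
   Virtual crossings are not recorded (they play no role for colorings
   nor for S).  [sign c = true] means that crossing c is positive. *)
Inductive event := Bar | Over of nat | Under of nat.

Definition event_enc (e : event) : option (bool * nat) :=
  match e with Bar => None | Over c => Some (true, c) | Under c => Some (false, c) end.
Definition event_dec (o : option (bool * nat)) : event :=
  match o with None => Bar | Some (true, c) => Over c | Some (false, c) => Under c end.
Lemma event_encK : cancel event_enc event_dec. Proof. by case. Qed.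
HB.instance Definition _ := Equality.copy event (can_type event_encK).

Record twisted_diagram := TwistedDiagram {
  code : seq event;        (* cyclic sequence of events along the knot *)
  sign : nat -> bool
}.

Definition wf_diagram (K : twisted_diagram) : Prop :=
  uniq [seq e <- code K | e != Bar] /\
  forall c, (Over c \in code K) = (Under c \in code K).

Definition nbars (K : twisted_diagram) : nat := count (pred1 Bar) (code K).

(* Segments: for i < size (code K), segment i is the piece of the knot from
   event i to event i+1 (cyclically).  Segment entering / leaving event i: *)
Definition seg_in (K : twisted_diagram) (i : nat) : nat :=
  (i + size (code K)).-1 %% size (code K).
Definition seg_out (K : twisted_diagram) (i : nat) : nat := i.

Definition is_coloring (K : twisted_diagram) (col : nat -> int) : Prop :=
  (forall i, i < size (code K) -> nth Bar (code K) i = Bar ->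
     (col (seg_out K i) = - col (seg_in K i))%R) /\
  (forall i j c, i < size (code K) -> j < size (code K) ->
     nth Bar (code K) i = Under c -> nth Bar (code K) j = Over c ->
     if sign K c then
       (* positive: right of over-strand = incoming under segment,
          right of under-strand = outgoing over segment *)
       (col (seg_out K i) = col (seg_in K i) + 1 /\
       col (seg_in K j) = col (seg_out K j) + 1)%R
     else
       (* negative: right of over-strand = outgoing under segment,
          right of under-strand = incoming over segment *)
       (col (seg_in K i) = col (seg_out K i) + 1 /\
       col (seg_out K j) = col (seg_in K j) + 1)%R).

Definition colorable (K : twisted_diagram) : Prop := exists col, is_coloring K col.

Fixpoint split_bars (s : seq event) : seq (seq event) :=
  match s with
  | [::] => [:: [::]]
  | Bar :: s' => [::] :: split_bars s'
  | e :: s' =>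
      match split_bars s' with
      | h :: t => (e :: h) :: t
      | [::] => [:: [:: e]]
      end
  end.

(* The edges e_1, ..., e_{2n}, numbered consecutively from the first bar of
   the code (list index k stands for e_{k+1}); no edges if no bars. *)
Definition edges (K : twisted_diagram) : seq (seq event) :=
  if Bar \in code K then
    split_bars (behead (rot (index Bar (code K)) (code K)))
  else [::].

Definition o_plus (K : twisted_diagram) (e : seq event) : nat :=
  count (fun x => if x is Over c then sign K c else false) e.
Definition o_minus (K : twisted_diagram) (e : seq event) : nat :=
  count (fun x => if x is Over c then ~~ sign K c else false) e.
Definition u_plus (K : twisted_diagram) (e : seq event) : nat :=
  count (fun x => if x is Under c then sign K c else false) e.
Definition u_minus (K : twisted_diagram) (e : seq event) : nat :=
  count (fun x => if x is Under c then ~~ sign K c else false) e.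

Definition s_edge (K : twisted_diagram) (e : seq event) : int :=
  ((u_plus K e)%:Z + (o_minus K e)%:Z - (u_minus K e)%:Z - (o_plus K e)%:Z)%R.

Definition S_inv (K : twisted_diagram) : nat :=
  let E := edges K in
  `| (\sum_(k < size E | ~~ odd k) s_edge K (nth [::] E k)
      - \sum_(k < size E | odd k) s_edge K (nth [::] E k))%R |%N.

(* Main.v *)
Require Import Defs.
From HB Require Import structures.
From mathcomp Require Import all_boot all_order all_algebra.
From mathcomp Require Import ring lra zify.
Import Order.TTheory GRing.Theory Num.Theory.
Local Open Scope ring_scope.

Definition delta (K : twisted_diagram) (e : event) : int :=
  match e with
  | Bar => 0
  | Over c => if sign K c then -1 else 1
  | Under c => if sign K c then 1 else -1
  end.

Definition T (K : twisted_diagram) (e : event) (x : int) : int :=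
  match e with Bar => - x | _ => x + delta K e end.

Definition run (K : twisted_diagram) (s : seq event) (x : int) : int :=
  foldl (fun y e => T K e y) x s.

Lemma run_cat K a b x : run K (a ++ b) x = run K b (run K a x).
Proof. by rewrite /run foldl_cat. Qed.

Lemma run_rcons K a e x : run K (rcons a e) x = T K e (run K a x).
Proof. by rewrite /run foldl_rcons. Qed.

Lemma s_edge_cons K e h : s_edge K (e :: h) = delta K e + s_edge K h.
Proof.
rewrite /s_edge /o_plus /o_minus /u_plus /u_minus /=.
case: e => [|c|c] /=; first by rewrite /=; lia.
all: case: (sign K c) => /=; rewrite ?add0n ?add1n; lia.
Qed.

Definition alt K (l : seq (seq event)) : int :=
  foldr (fun p acc => s_edge K p - acc) 0 l.

Lemma s_edge_nil K : s_edge K [::] = 0.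
Proof. by rewrite /s_edge /=. Qed.

Lemma split_bars_nonnil t : split_bars t != [::].
Proof. case: t => [|[|c|c] t] //=; by case: (split_bars t). Qed.

Lemma run_split K t y :
  run K t y = if odd (count (pred1 Bar) t) then - (y + alt K (split_bars t))
              else y + alt K (split_bars t).
Proof.
elim: t y => [|e t IH] y /=; first by rewrite /alt /s_edge /=; lia.
have Hn := split_bars_nonnil t.
case: e => [|c|c] /=.
- rewrite /run /= -/(run K t (-y)) IH /= s_edge_nil.
  case: (odd _) => /=; ring.
all: rewrite /run /= -/(run K t _) IH add0n.
all: case E: (split_bars t) Hn => [|h r] //= _.
all: rewrite s_edge_cons /=; case: (odd _) => /=; ring.
Qed.

Definition local K (col : nat -> int) :=
  forall i, (i < size (code K))%N -> col i = T K (nth Bar (code K) i) (col (seg_in K i)).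

Lemma local_iff (K : twisted_diagram) (col : nat -> int) : (forall c, (Over c \in code K) = (Under c \in code K)) ->
  is_coloring K col <-> local K col.
Proof.
move=> Hw; split.
- case=> Hb Hc i Hi; case Ei: (nth Bar (code K) i) => [|c|c] /=.
  + exact: Hb.
  + have HU : Under c \in code K by rewrite -Hw -Ei mem_nth.
    have Hj : (index (Under c) (code K) < size (code K))%N by rewrite index_mem.
    have := Hc _ _ c Hj Hi (nth_index _ HU) Ei.
    rewrite /seg_out; case: (sign K c) => -[_ ->] /=; ring.
  + have HO : Over c \in code K by rewrite Hw -Ei mem_nth.
    have Hj : (index (Over c) (code K) < size (code K))%N by rewrite index_mem.
    have := Hc _ _ c Hi Hj Ei (nth_index _ HO).
    rewrite /seg_out; case: (sign K c) => -[-> _] /=; ring.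
- move=> L; split.
  + by move=> i Hi Ei; rewrite /seg_out L // Ei.
  + move=> i j c Hi Hj Ei Ej; rewrite /seg_out (L i Hi) (L j Hj) Ei Ej /=.
    case: (sign K c); split; ring.
Qed.

Lemma seg_in0 K : (0 < size (code K))%N -> seg_in K 0 = (size (code K)).-1.
Proof. by move=> H; rewrite /seg_in add0n modn_small // prednK. Qed.

Lemma seg_inS K i : (i.+1 < size (code K))%N -> seg_in K i.+1 = i.
Proof.
move=> H; rewrite /seg_in addSn /= modnDr modn_small //; lia.
Qed.

Lemma fix_iff K : (exists col, local K col) <-> exists x, run K (code K) x = x.
Proof.
have [N0|Npos] := posnP (size (code K)).
  split=> _; last by exists (fun _ => 0) => i; rewrite N0.
  by exists 0; move/size0nil: N0 => ->.
split.
- case=> col L; exists (col (size (code K)).-1).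
  suff H : forall k, (k < size (code K))%N ->
      run K (take k.+1 (code K)) (col (size (code K)).-1) = col k.
    by rewrite -{1}(take_size (code K)) -{1}(prednK Npos) H // prednK.
  elim=> [|k IH] Hk.
  + rewrite (take_nth Bar) // take0 (L 0 Hk) seg_in0 //.
  + rewrite (take_nth Bar) // run_rcons IH ?(L _ Hk) ?seg_inS //; lia.
- case=> x Hx; exists (fun k => run K (take k.+1 (code K)) x) => -[|i] Hi.
  + rewrite seg_in0 // prednK // take_size Hx (take_nth Bar) // take0.
    by [].
  + by rewrite seg_inS // (take_nth Bar Hi) run_rcons.
Qed.

Lemma rot_fix1 K s k : (exists x, run K s x = x) -> exists y, run K (rot k s) y = y.
Proof.
case=> x Hx; exists (run K (take k s) x).
by rewrite /rot run_cat -(run_cat K (take k s)) cat_take_drop Hx.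
Qed.

Lemma rot_fix K s k : (exists x, run K s x = x) <-> exists y, run K (rot k s) y = y.
Proof.
split; first exact: rot_fix1.
move=> H; rewrite -(rotK k s) /rotr; exact: rot_fix1.
Qed.

Lemma alt_S K E :
  (\sum_(k < size E | ~~ odd k) s_edge K (nth [::] E k)
      - \sum_(k < size E | odd k) s_edge K (nth [::] E k)) = alt K E.
Proof.
elim: E => [|p E IH]; first by rewrite !big_ord0 subr0.
rewrite /= (big_mkcond (fun k : 'I_ _ => ~~ odd k)) (big_mkcond (fun k : 'I_ _ => odd k)) /=.
rewrite !big_ord_recl /= -IH (big_mkcond (fun k : 'I_ _ => ~~ odd k))
  (big_mkcond (fun k : 'I_ _ => odd k)) /=.
under eq_bigr do rewrite negbK.
ring.
Qed.

Lemma run_nobar K s y : Bar \notin s -> run K s y = y + \sum_(x <- s) delta K x.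
Proof.
elim: s y => [|e s IH] y; first by rewrite big_nil addr0.
rewrite in_cons negb_or big_cons => /andP[He Hs].
rewrite /run /= -/(run K s _) IH //.
by case: e He => // c _ /=; rewrite addrA.
Qed.

Definition sw (e : event) : event :=
  match e with Bar => Bar | Over c => Under c | Under c => Over c end.

Lemma swK : involutive sw. Proof. by case. Qed.

Lemma sum_delta0 K : wf_diagram K -> \sum_(x <- code K) delta K x = 0.
Proof.
case=> Hu Hw.
set f := [seq e <- code K | e != Bar].
have -> : \sum_(x <- code K) delta K x = \sum_(x <- f) delta K x.
  by rewrite big_filter [RHS]big_mkcond /=; apply: eq_bigr => -[|c|c] _.
have Hmem : forall x, (sw x \in f) = (x \in f).
  by move=> [|c|c]; rewrite !mem_filter //= Hw.
have Hp : perm_eq f (map sw f).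
  apply: uniq_perm => //; first by rewrite (map_inj_uniq (inv_inj swK)).
  move=> x; rewrite -{2}(swK x) (mem_map (inv_inj swK)) Hmem //.
have : \sum_(x <- f) delta K x = - \sum_(x <- f) delta K x.
  rewrite {1}(perm_big _ Hp) big_map -sumrN; apply: eq_bigr => -[|c|c] _ /=;
    [by rewrite oppr0 | |]; by case: (sign K c); rewrite ?opprK.
lia.
Qed.

Theorem lemma7p6 (K : twisted_diagram) :
  wf_diagram K -> ~~ odd (nbars K) -> (colorable K <-> S_inv K = 0%N).
Proof.
move=> Hwf Hev; have [Hu Hw] := Hwf.
have -> : colorable K <-> exists x, run K (code K) x = x.
  rewrite /colorable -fix_iff; split=> -[col H]; exists col; move: H.
  - by move/(local_iff K col Hw).
  - by move/(local_iff K col Hw).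
case: (boolP (Bar \in code K)) => Hb.
- set i := index Bar (code K).
  have Hi : (i < size (code K))%N by rewrite index_mem.
  have Er : rot i (code K) = Bar :: behead (rot i (code K)).
    by rewrite /rot (drop_nth Bar Hi) nth_index.
  rewrite (rot_fix K (code K) i) Er.
  have Hcnt : odd (count (pred1 Bar) (behead (rot i (code K)))).
    move: Hev; rewrite /nbars -(permP (permEl (perm_rot i (code K))) (pred1 Bar)) Er /=.
    by rewrite add0n negbK.
  rewrite /S_inv /edges Hb -/i alt_S.
  set A := alt K _.
  have Hr : forall y, run K (Bar :: behead (rot i (code K))) y = y - A.
    move=> y; rewrite /run /= -/(run K _ _) run_split Hcnt -/A; ring.
  split.
  + case=> y; rewrite Hr => Hy.
    apply/eqP; rewrite absz_eq0; apply/eqP; lia.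
  + move/eqP; rewrite absz_eq0 => /eqP HA; exists 0; by rewrite Hr HA subr0.
- have -> : S_inv K = 0%N by rewrite /S_inv /edges (negbTE Hb) /= !big_ord0.
  split=> // _; exists 0; by rewrite run_nobar // sum_delta0.
Qed.
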